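(* Let $a,b,c$ be positive integers. For any non-negative integers $p,m,n$, \[\zeta^\star_p(\{c\}^m,b,\{a\}^n)=\sum_{k=0}^m\sum_{l=0}^n(-1)^{k+l}\zeta_p(\{a\}^l,b,\{c\}^k)\cdot\zeta^\star_p(\{c\}^{m-k})\cdot\zeta^\star_p(\{a\}^{n-l}).\]
   Context: For an integer $p\geq 0$ and positive integers $k_1,\ldots,k_n$, $\zeta_p(k_1,\ldots,k_n)=\sum_{p\geq p_1>\cdots>p_n>0}p_1^{-k_1}\cdots p_n^{-k_n}$ and $\zeta^\star_p(k_1,\ldots,k_n)=\sum_{p\geq p_1\geq\cdots\geq p_n\geq 1}p_1^{-k_1}\cdots p_n^{-k_n}$; empty sums are $0$ and $\zeta_p(\varnothing)=\zeta^\star_p(\varnothing)=1$ for the empty index (also when $p=0$). $\{a\}^m$ denotes $m$ copies of $a$. *)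

(* Defs.v *)
From mathcomp Require Import all_boot all_order all_algebra.
Set Implicit Arguments. Unset Strict Implicit. Unset Printing Implicit Defensive.
Import Order.TTheory GRing.Theory Num.Theory.
Local Open Scope ring_scope.

Definition zetap (p : nat) (ks : seq nat) : rat :=
  \sum_(f : {ffun 'I_(size ks) -> 'I_p.+1} |
          [forall i : 'I_(size ks), (0 < f i)%N] &&
          [forall i : 'I_(size ks), forall j : 'I_(size ks), (i < j)%N ==> (f j < f i)%N])
    \prod_(i < size ks) ((f i)%:R ^- (nth 0%N ks i)).

Definition zetap_star (p : nat) (ks : seq nat) : rat :=
  \sum_(f : {ffun 'I_(size ks) -> 'I_p.+1} |
          [forall i : 'I_(size ks), (0 < f i)%N] &&
          [forall i : 'I_(size ks), forall j : 'I_(size ks), (i < j)%N ==> (f j <= f i)%N])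
    \prod_(i < size ks) ((f i)%:R ^- (nth 0%N ks i)).

(* Main.v *)
Require Import Defs.
From mathcomp Require Import all_boot all_order all_algebra zify ring.
Import Order.TTheory GRing.Theory Num.Theory.
Local Open Scope ring_scope.
Set Implicit Arguments. Unset Strict Implicit. Unset Printing Implicit Defensive.

Definition relst (st : bool) (a b : nat) := if st then (a < b)%N else (a <= b)%N.

Definition Zg (N : nat) (st : bool) (ks : seq nat) (U : nat) : rat :=
  \sum_(g : {ffun 'I_(size ks) -> 'I_N} |
          [forall i, (0 < g i)%N] &&
          [forall i : 'I_(size ks), forall j : 'I_(size ks), (i < j)%N ==> relst st (g j) (g i)] &&
          [forall i, (g i <= U)%N])
    \prod_(i < size ks) ((g i)%:R ^- (nth 0%N ks i)).

Fixpoint zrec (st : bool) (ks : seq nat) (U : nat) : rat :=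
  match ks with
  | [::] => 1
  | k :: ks' => \sum_(1 <= j < U.+1) (j%:R ^- k) * zrec st ks' (if st then j.-1 else j)
  end.

Lemma forall_recl n (P : 'I_n.+1 -> bool) :
  [forall i, P i] = P ord0 && [forall i : 'I_n, P (lift ord0 i)].
Proof.
apply/forallP/andP => [H|[H0 /forallP H] i]; first by split => //; apply/forallP.
by case: (unliftP ord0 i) => [j ->|->].
Qed.

Definition hf N n (x : 'I_N) (g : {ffun 'I_n -> 'I_N}) : {ffun 'I_n.+1 -> 'I_N} :=
  [ffun i => if unlift ord0 i is Some i' then g i' else x].

Lemma hf0 N n x g : @hf N n x g ord0 = x.
Proof. by rewrite ffunE unlift_none. Qed.
Lemma hfS N n x g i : @hf N n x g (lift ord0 i) = g i.
Proof. by rewrite ffunE liftK. Qed.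

Lemma hf_bij N n : bijective (fun p : 'I_N * {ffun 'I_n -> 'I_N} => hf p.1 p.2).
Proof.
exists (fun f : {ffun 'I_n.+1 -> 'I_N} => (f ord0, [ffun i => f (lift ord0 i)])).
  case=> x g /=; rewrite hf0; congr pair; apply/ffunP=> i; by rewrite ffunE hfS.
move=> f; apply/ffunP => i; rewrite ffunE /=.
by case: (unliftP ord0 i) => [j ->|->] /=; rewrite ?ffunE.
Qed.

Lemma cond_hf N n st U (x : 'I_N) (g : {ffun 'I_n -> 'I_N}) :
  [forall i, (0 < hf x g i)%N] &&
  [forall i : 'I_n.+1, forall j : 'I_n.+1, (i < j)%N ==> relst st (hf x g j) (hf x g i)] &&
  [forall i, (hf x g i <= U)%N]
  = ((0 < x)%N && (x <= U)%N) &&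
    ([forall i, (0 < g i)%N] &&
     [forall i : 'I_n, forall j : 'I_n, (i < j)%N ==> relst st (g j) (g i)] &&
     [forall i, (g i <= (if st then x.-1 else x))%N]).
Proof.
rewrite !forall_recl !hf0.
have E1 : [forall i : 'I_n, (0 < hf x g (lift ord0 i))%N] = [forall i, (0 < g i)%N].
  by apply: eq_forallb => i; rewrite hfS.
have E2 : [forall i : 'I_n, (hf x g (lift ord0 i) <= U)%N] = [forall i, (g i <= U)%N].
  by apply: eq_forallb => i; rewrite hfS.
have E3 : [forall i : 'I_n, (@ord0 n < lift ord0 i)%N ==> relst st (hf x g (lift ord0 i)) x]
        = [forall j, relst st (g j) x].
  by apply: eq_forallb => j; rewrite hfS.
have E4 : [forall i : 'I_n, forall j : 'I_n.+1, (lift ord0 i < j)%N ==> relst st (hf x g j) (hf x g (lift ord0 i))]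
        = [forall i : 'I_n, forall j : 'I_n, (i < j)%N ==> relst st (g j) (g i)].
  apply: eq_forallb => i; rewrite forall_recl /=; apply: eq_forallb => j.
  by rewrite !hfS ?lift0.
rewrite /= E1 E2 E3 E4; clear E1 E2 E3 E4.
case: (boolP (0 < x)%N) => x0 //=.
case: (boolP (x <= U)%N) => xU /=; last by rewrite andbF.
have K : [forall j, relst st (g j) x] && [forall i, (g i <= U)%N] = [forall i, (g i <= (if st then x.-1 else x))%N].
  apply/andP/forallP => [[/forallP H1 /forallP H2] i | H].
    by move: (H1 i) (H2 i); clear H1 H2; rewrite /relst; case: st => /=; lia.
  by split; apply/forallP=> i; move: (H i); clear H; rewrite /relst; case: st => /=; lia.
move: K.
case: [forall j, relst st (g j) x]; case: [forall i, (g i <= U)%N];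
 case: [forall i, (g i <= (if st then x.-1 else x))%N]; case: [forall i, (0 < g i)%N];
 case: [forall i : 'I_n, forall j : 'I_n, (i < j)%N ==> relst st (g j) (g i)] => //.
Qed.

Lemma sum_ordN N U (F : nat -> rat) : (U < N)%N ->
  \sum_(x < N | (0 < x <= U)%N) F x = \sum_(1 <= j < U.+1) F j.
Proof.
move=> UN; rewrite -(big_mkord (fun x => (0 < x <= U)%N) F) big_ltn_cond /=; last lia.
rewrite (@big_nat_widen _ _ _ 1 U.+1 N) //.
rewrite big_nat_cond [RHS]big_nat_cond; apply: eq_bigl => i; lia.
Qed.

Lemma Zg_rec N st k ks U : (U < N)%N ->
  Zg N st (k :: ks) U =
  \sum_(1 <= j < U.+1) (j%:R ^- k) * Zg N st ks (if st then j.-1 else j).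
Proof.
move=> UN; rewrite /Zg /=.
rewrite (reindex (fun p : 'I_N * {ffun 'I_(size ks) -> 'I_N} => hf p.1 p.2)) /=;
  last exact: onW_bij (hf_bij _ _).
rewrite (eq_bigl _ _ (fun p => cond_hf st U p.1 p.2)).
rewrite (eq_bigr (fun p : 'I_N * {ffun 'I_(size ks) -> 'I_N} => (p.1 : nat)%:R ^- k *
   \prod_(i < size ks) ((p.2 i : nat)%:R ^- nth 0%N ks i))); last first.
  move=> p _; rewrite big_ord_recl hf0; congr (_ * _); apply: eq_bigr => i _.
  by rewrite hfS lift0.
rewrite -(pair_big_dep (fun x : 'I_N => (0 < x <= U)%N)
   (fun x (g : {ffun 'I_(size ks) -> 'I_N}) =>
     [forall i, (0 < g i)%N] &&
     [forall i : 'I_(size ks), forall j : 'I_(size ks), (i < j)%N ==> relst st (g j) (g i)] &&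
     [forall i, (g i <= (if st then x.-1 else x))%N])
   (fun x g => (x : nat)%:R ^- k * \prod_(i < size ks) ((g i : nat)%:R ^- nth 0%N ks i))).
rewrite -(@sum_ordN N U) //.
by apply: eq_bigr => x _; rewrite -big_distrr.
Qed.

Lemma Zg_nil N st U : (0 < N)%N -> Zg N st [::] U = 1.
Proof.
move=> N0; rewrite /Zg /=.
rewrite (eq_bigl xpredT); last first.
  by move=> g; apply/andP; split; [apply/andP; split|]; apply/forallP => -[].
rewrite (eq_bigr (fun _ => 1)); last by move=> g _; rewrite big_ord0.
by rewrite sumr_const card_ffun !card_ord expn0.
Qed.

Lemma Zg_zrec N st ks U : (U < N)%N -> Zg N st ks U = zrec st ks U.
Proof.
elim: ks U => [|k ks IH] U UN /=; first by rewrite Zg_nil //; lia.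
rewrite Zg_rec //; apply: eq_big_nat => j /andP[j1 jU].
by rewrite IH //; move: UN jU {IH}; case: st; lia.
Qed.

Lemma zetap_rec p ks : zetap p ks = zrec true ks p.
Proof.
rewrite -(@Zg_zrec p.+1) // /zetap /Zg; apply: eq_bigl => g.
suff -> : [forall i, (g i <= p)%N] by rewrite andbT.
by apply/forallP => i; rewrite -ltnS.
Qed.

Lemma zetap_star_rec p ks : zetap_star p ks = zrec false ks p.
Proof.
rewrite -(@Zg_zrec p.+1) // /zetap_star /Zg; apply: eq_bigl => g.
suff -> : [forall i, (g i <= p)%N] by rewrite andbT.
by apply/forallP => i; rewrite -ltnS.
Qed.
Fixpoint hs (w : nat -> rat) (m L U : nat) : rat :=
  match m with
  | 0 => 1
  | m'.+1 => \sum_(L.+1 <= j < U.+1) w j * hs w m' L j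
  end.

Fixpoint et (w : nat -> rat) (m L U : nat) : rat :=
  match m with
  | 0 => 1
  | m'.+1 => \sum_(L.+1 <= j < U.+1) w j * et w m' L j.-1
  end.

Lemma hs_top w m L U : (L <= U)%N -> hs w m.+1 L U.+1 = hs w m.+1 L U + w U.+1 * hs w m L U.+1.
Proof. by move=> LU; rewrite /= big_nat_recr. Qed.

Lemma et_top w m L U : (L <= U)%N -> et w m.+1 L U.+1 = et w m.+1 L U + w U.+1 * et w m L U.
Proof. by move=> LU; rewrite /= big_nat_recr. Qed.

Lemma hs_diag w m U : hs w m U U = (m == 0%N)%:R.
Proof. by case: m => //= m; rewrite big_geq. Qed.

Lemma et_diag w m U : et w m U U = (m == 0%N)%:R.
Proof. by case: m => //= m; rewrite big_geq. Qed.

Definition D (w : rat) (f : nat -> rat) (i : nat) : rat :=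
  f i - (if i is i'.+1 then w * f i' else 0).

Definition conv (f g : nat -> rat) (n : nat) : rat := \sum_(i < n.+1) f i * g (n - i)%N.

Lemma eq_conv f1 f2 g1 g2 n : (forall i, f1 i = f2 i) -> (forall i, g1 i = g2 i) ->
  conv f1 g1 n = conv f2 g2 n.
Proof. by move=> Hf Hg; apply: eq_bigr => i _; rewrite Hf Hg. Qed.

Lemma convDr w f g n : conv f (D w g) n = D w (conv f g) n.
Proof.
rewrite /conv /D; case: n => [|n].
  by rewrite !big_ord_recr !big_ord0 /= !subr0 !add0r.
rewrite (eq_bigr (fun i : 'I_n.+2 => f i * g (n.+1 - i)%N -
   f i * (if (n.+1 - i)%N is i'.+1 then w * g i' else 0))); last by move=> i _; rewrite mulrBr.
rewrite sumrB; congr (_ - _).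
rewrite big_ord_recr /= subnn mulr0 addr0 big_distrr /=.
apply: eq_bigr => i _; rewrite subSn /=; last by rewrite -ltnS.
by rewrite mulrCA.
Qed.

Lemma convDl w f g n : conv (D w f) g n = D w (conv f g) n.
Proof.
rewrite /conv /D; case: n => [|n].
  by rewrite !big_ord_recr !big_ord0 /= !subn0 subr0 ?mulr1 ?subr0 !add0r.
rewrite (eq_bigr (fun i : 'I_n.+2 => f i * g (n.+1 - i)%N -
   (if (i : nat) is i'.+1 then w * f i' else 0) * g (n.+1 - i)%N)); last by move=> i _; rewrite mulrBl.
rewrite sumrB; congr (_ - _).
rewrite big_ord_recl /= mul0r add0r big_distrr /=.
apply: eq_bigr => i _; rewrite ?lift0 subSS.
by rewrite mulrA.
Qed.

Lemma D_inj w X Y : (forall n, D w X n = D w Y n) -> forall n, X n = Y n.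
Proof.
move=> H; elim=> [|n IH]; first by have := H 0%N; rewrite /D !subr0.
by have := H n.+1; rewrite /D IH => /addIr.
Qed.

Lemma eD_et w k L U : (L <= U)%N ->
  (-1) ^+ k * et w k L U.+1 = D (w U.+1) (fun k => (-1) ^+ k * et w k L U) k.
Proof.
move=> LU; rewrite /D; case: k => [|k] /=; first by rewrite subr0.
rewrite big_nat_recr //= exprS; ring.
Qed.

Lemma hD_hs w j L U : (L <= U)%N -> D (w U.+1) (fun j => hs w j L U.+1) j = hs w j L U.
Proof.
move=> LU; rewrite /D; case: j => [|j] /=; first by rewrite subr0.
rewrite big_nat_recr //=; ring.
Qed.

Lemma inv_lem w L n :
  conv (fun k => (-1) ^+ k * et w k 0 L) (fun j => hs w j 0 L) n = (n == 0%N)%:R.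
Proof.
elim: L n => [|L IH] n.
  rewrite /conv big_ord_recl !et_diag !hs_diag subn0 /= expr0 !mul1r big1 ?addr0 //.
  by move=> i _; rewrite big_geq // mulr0 mul0r.
rewrite (@eq_conv _ (D (w L.+1) (fun k => (-1) ^+ k * et w k 0 L)) _ (fun j => hs w j 0 L.+1));
  [|by move=> i; rewrite eD_et|by []].
rewrite convDl -convDr.
rewrite (@eq_conv _ (fun k => (-1) ^+ k * et w k 0 L) _ (fun j => hs w j 0 L)) //.
by move=> i; rewrite hD_hs.
Qed.

Lemma A_lem w L d m :
  hs w m L (L + d) = conv (fun k => (-1) ^+ k * et w k 0 L) (fun j => hs w j 0 (L + d)) m.
Proof.
elim: d m => [|d IH] m; first by rewrite addn0 hs_diag inv_lem.
rewrite addnS.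
apply: (D_inj (w := w (L + d).+1) (X := fun m => hs w m L (L + d).+1)
   (Y := conv (fun k => (-1) ^+ k * et w k 0 L) (fun j => hs w j 0 (L + d).+1))) => n.
rewrite hD_hs ?leq_addr // IH -convDr; apply: eq_conv => // j.
by rewrite hD_hs.
Qed.

Lemma B_lem w L d n :
  hs w n 0 L = conv (fun l => (-1) ^+ l * et w l L (L + d)) (fun j => hs w j 0 (L + d)) n.
Proof.
elim: d n => [|d IH] n.
  rewrite addn0 /conv big_ord_recl et_diag subn0 /= expr0 !mul1r big1 ?addr0 //.
  by move=> i _; rewrite big_geq // mulr0 mul0r.
rewrite IH addnS.
rewrite [RHS](@eq_conv _ (D (w (L + d).+1) (fun l => (-1) ^+ l * et w l L (L + d))) _
   (fun j => hs w j 0 (L + d).+1)); [|by move=> i; rewrite eD_et ?leq_addr|by []].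
rewrite [RHS]convDl -[RHS]convDr; apply: eq_conv => // j.
by rewrite hD_hs.
Qed.

Definition wt (e j : nat) : rat := j%:R ^- e.

Lemma zs_nseq c m U : zrec false (nseq m c) U = hs (wt c) m 0 U.
Proof.
elim: m U => [|m IH] U //=; apply: eq_bigr => j _; by rewrite IH.
Qed.

Lemma zt_nseq c m U : zrec true (nseq m c) U = et (wt c) m 0 U.
Proof.
elim: m U => [|m IH] U //=; apply: eq_bigr => j _; by rewrite IH.
Qed.

Lemma tri1 U (F : nat -> nat -> rat) :
  \sum_(1 <= i < U.+1) \sum_(1 <= j < i.+1) F i j =
  \sum_(1 <= j < U.+1) \sum_(j <= i < U.+1) F i j.
Proof.
elim: U => [|U IH]; first by rewrite !big_geq.
rewrite big_nat_recr //= IH [in RHS]big_nat_recr //= big_nat1.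
rewrite [in RHS](@eq_big_nat _ _ _ 1 U.+1 _ (fun j => \sum_(j <= i < U.+1) F i j + F U.+1 j));
  last by move=> j /andP[_ jU]; rewrite big_nat_recr //; exact: ltnW.
rewrite [in RHS]big_split /= (@big_nat_recr _ _ _ U.+1 1 (F U.+1)) //.
by rewrite addrA.
Qed.

Lemma tri2 U (F : nat -> nat -> rat) :
  \sum_(1 <= i < U.+1) \sum_(1 <= j < i) F i j =
  \sum_(1 <= j < U.+1) \sum_(j.+1 <= i < U.+1) F i j.
Proof.
elim: U => [|U IH]; first by rewrite !big_geq.
rewrite big_nat_recr //= IH [in RHS]big_nat_recr //= [X in _ = _ + X]big_geq // addr0.
rewrite [in RHS](@eq_big_nat _ _ _ 1 U.+1 _ (fun j => \sum_(j.+1 <= i < U.+1) F i j + F U.+1 j));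
  last by move=> j /andP[_ jU]; rewrite big_nat_recr.
by rewrite big_split.
Qed.

Lemma C_lem b c m rest U :
  zrec false (nseq m c ++ b :: rest) U =
  \sum_(1 <= j < U.+1) hs (wt c) m j.-1 U * (wt b j * zrec false rest j).
Proof.
elim: m U => [|m IH] U /=; first by apply: eq_bigr => j _; rewrite mul1r.
rewrite (eq_bigr (fun i => \sum_(1 <= j < i.+1) wt c i * (hs (wt c) m j.-1 i * (wt b j * zrec false rest j))));
  last by move=> i _; rewrite IH big_distrr.
rewrite tri1; apply: eq_big_nat => j /andP[j1 jU].
rewrite prednK // big_distrl; apply: eq_bigr => i _; by rewrite mulrA.
Qed.

Lemma D_lem b a l rest U :
  zrec true (nseq l a ++ b :: rest) U =
  \sum_(1 <= j < U.+1) et (wt a) l j U * (wt b j * zrec true rest j.-1).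
Proof.
elim: l U => [|l IH] U /=; first by apply: eq_bigr => j _; rewrite mul1r.
rewrite (@eq_big_nat _ _ _ 1 U.+1 _ (fun i => \sum_(1 <= j < i) wt a i * (et (wt a) l j i.-1 * (wt b j * zrec true rest j.-1))));
  last by move=> i /andP[i1 _]; rewrite IH big_distrr prednK.
rewrite tri2; apply: eq_big_nat => j /andP[j1 jU].
rewrite big_distrl; apply: eq_bigr => i _; by rewrite mulrA.
Qed.

Lemma A' w L U m : (L <= U)%N ->
  hs w m L U = conv (fun k => (-1) ^+ k * et w k 0 L) (fun j => hs w j 0 U) m.
Proof. by move=> LU; rewrite -(subnKC LU); exact: A_lem. Qed.

Lemma B' w L U n : (L <= U)%N ->
  hs w n 0 L = conv (fun l => (-1) ^+ l * et w l L U) (fun j => hs w j 0 U) n.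
Proof. by move=> LU; rewrite -(subnKC LU); exact: B_lem. Qed.

Unset Implicit Arguments.
Theorem proposition2p2 (a b c : nat) (ha : (0 < a)%N) (hb : (0 < b)%N)
    (hc : (0 < c)%N) (p m n : nat) :
  zetap_star p (nseq m c ++ b :: nseq n a) =
  \sum_(k < m.+1) \sum_(l < n.+1)
     (-1) ^+ (k + l) * zetap p (nseq l a ++ b :: nseq k c)
       * zetap_star p (nseq (m - k) c) * zetap_star p (nseq (n - l) a).
Proof.
rewrite zetap_star_rec C_lem.
rewrite (@eq_big_nat _ _ _ 1 p.+1 _ (fun j => \sum_(k < m.+1) \sum_(l < n.+1)
   ((-1) ^+ k * et (wt c) k 0 j.-1 * hs (wt c) (m - k) 0 p) *
   (wt b j * ((-1) ^+ l * et (wt a) l j p * hs (wt a) (n - l) 0 p)))); last first.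
  move=> j /andP[j1 jp].
  rewrite zs_nseq (@A' _ j.-1 p) ?(leq_trans (leq_pred j)) // (@B' _ j p) //.
  rewrite /conv big_distrl; apply: eq_bigr => k _.
  by rewrite big_distrr big_distrr.
rewrite exchange_big; apply: eq_bigr => k _.
rewrite exchange_big; apply: eq_bigr => l _.
rewrite zetap_rec D_lem !zetap_star_rec !zs_nseq big_distrr big_distrl big_distrl.
apply: eq_big_nat => j _.
rewrite /= zt_nseq exprD; ring.
Qed.
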